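(* Let $M_{1/2} := \mathbb{N}_0[\frac12]$ and let $P(x)$ be a nonzero element of the monoid algebra $\mathbb{Q}[M_{1/2}]$. The following are equivalent: (a) $P(x)$ has only finitely many divisors in $\mathbb{Q}[M_{1/2}]$ up to associates; (b) $P(x)$ satisfies the ACCP, i.e., every ascending chain of principal ideals of $\mathbb{Q}[M_{1/2}]$ starting at $P(x)\mathbb{Q}[M_{1/2}]$ stabilizes; (c) $P(x)$ is atomic, i.e., it is a unit or a finite product of irreducible elements of $\mathbb{Q}[M_{1/2}]$.
   Context: $\mathbb{Q}[M_{1/2}]$ is the integral domain of polynomial expressions $\sum c_i x^{m_i}$ with $c_i \in \mathbb{Q}$ and $m_i$ nonnegative dyadic rationals. *)

(* Defs.v *)
(* Every element of Q[M_{1/2}] lies in some subring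
   Q[x^{1/2^n}] ~ Q[t] (t = x^{1/2^n}); Q[M_{1/2}] is the directed union of
   these polynomial rings along the embeddings t |-> t^2.
   An element is represented by a pair (n, p) with p : {poly rat}, standing
   for p(x^{1/2^n}).  Two representatives are equal in Q[M_{1/2}] iff they
   agree after being lifted to a common level ([qeq]).  All ring-theoretic
   notions below are invariant under [qeq]. *)
From HB Require Import structures.
From mathcomp Require Import all_boot all_order all_algebra.
Set Implicit Arguments. Unset Strict Implicit. Unset Printing Implicit Defensive.
Import Order.TTheory GRing.Theory Num.Theory.
Local Open Scope ring_scope.

Definition QM := (nat * {poly rat})%type.

(* embedding Q[x^{1/2^n}] -> Q[x^{1/2^(n+k)}]: t |-> t^(2^k) *)
Definition qlift (k : nat) (p : {poly rat}) : {poly rat} := p \Po 'X^(2 ^ k).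

(* the representative of a at level N (meaningful for N >= a.1) *)
Definition qat (N : nat) (a : QM) : {poly rat} := qlift (N - a.1) a.2.

Definition qeq (a b : QM) : Prop :=
  qat (maxn a.1 b.1) a = qat (maxn a.1 b.1) b.

Definition qmul (a b : QM) : QM :=
  (maxn a.1 b.1, qat (maxn a.1 b.1) a * qat (maxn a.1 b.1) b).

Definition qone : QM := (0%N, 1).

Definition qzero (a : QM) : Prop := a.2 = 0.

Definition qunit (a : QM) : Prop := exists b : QM, qeq (qmul a b) qone.

Definition qdvd (a b : QM) : Prop := exists c : QM, qeq (qmul a c) b.

Definition qassoc (a b : QM) : Prop :=
  exists u : QM, qunit u /\ qeq b (qmul u a).

Definition qirreducible (a : QM) : Prop :=
  ~ qzero a /\ ~ qunit a /\
  forall b c : QM, qeq a (qmul b c) -> qunit b \/ qunit c.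

Definition qprod (s : seq QM) : QM := foldr qmul qone s.

Definition fin_divisors (P : QM) : Prop :=
  exists s : seq QM, forall d : QM, qdvd d P -> exists2 e, e \in s & qassoc d e.

Definition accp_at (P : QM) : Prop :=
  forall f : nat -> QM, qeq (f 0%N) P -> (forall n, qdvd (f n.+1) (f n)) ->
  exists N : nat, forall n, (N <= n)%N -> qdvd (f N) (f n) /\ qdvd (f n) (f N).

Definition atomic_elt (P : QM) : Prop :=
  qunit P \/ exists s : seq QM, s <> [::] /\ (forall a, a \in s -> qirreducible a)
                              /\ qeq P (qprod s).

(* Main.v *)
Require Import Defs.
From mathcomp Require Import all_boot all_order all_algebra.
From mathcomp Require Import zify.
From Stdlib Require Import Classical ClassicalEpsilon.
Set Implicit Arguments. Unset Strict Implicit. Unset Printing Implicit Defensive.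
Import Order.TTheory GRing.Theory Num.Theory.
Local Open Scope ring_scope.

Lemma qlift0 p : qlift 0 p = p.
Proof. by rewrite /qlift expn0 expr1 comp_polyXr. Qed.

Lemma qliftD j k p : qlift j (qlift k p) = qlift (k + j) p.
Proof.
rewrite /qlift -comp_polyA comp_Xn_poly -exprM expnD mulnC.
done.
Qed.

Lemma qliftM k p q : qlift k (p * q) = qlift k p * qlift k q.
Proof. exact: comp_polyM. Qed.

Lemma qliftC k c : qlift k c%:P = c%:P.
Proof. exact: comp_polyC. Qed.

Lemma qlift1 k : qlift k 1 = 1.
Proof. by rewrite -polyC1 qliftC. Qed.

Lemma qlift0p k : qlift k 0 = 0.
Proof. by rewrite -polyC0 qliftC. Qed.

Lemma qlift_inj k : injective (qlift k).
Proof.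
move=> p q E; apply/polyP => i.
have H : forall r : {poly rat}, r`_i = (qlift k r)`_(i * 2 ^ k).
  move=> r; rewrite /qlift coef_comp_poly_Xn ?expn_gt0 //.
  by rewrite dvdn_mull // mulnK ?expn_gt0.
by rewrite !H E.
Qed.

Lemma qat_le a N M : (a.1 <= N)%N -> (N <= M)%N -> qat M a = qlift (M - N) (qat N a).
Proof. by move=> h1 h2; rewrite /qat qliftD; congr qlift; lia. Qed.

Lemma qeq_at N a b : (a.1 <= N)%N -> (b.1 <= N)%N -> qeq a b <-> qat N a = qat N b.
Proof.
move=> ha hb; rewrite /qeq.
have hm : (maxn a.1 b.1 <= N)%N by lia.
rewrite (qat_le (a:=a) _ hm) ?(qat_le (a:=b) _ hm); try lia.
split; first by move=> ->.
exact: qlift_inj.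
Qed.

Lemma qat_mul N a b : (a.1 <= N)%N -> (b.1 <= N)%N ->
  qat N (qmul a b) = qat N a * qat N b.
Proof.
move=> ha hb.
have hm : (maxn a.1 b.1 <= N)%N by lia.
rewrite /qmul {1}/qat /= qliftM -!(qat_le _ hm) //; lia.
Qed.

Lemma qat_one N : qat N qone = 1.
Proof. exact: qlift1. Qed.

Lemma qat_pair N p : qat N (N, p) = p.
Proof. by rewrite /qat /= subnn qlift0. Qed.

Lemma qat_eq0 N a : (qat N a == 0) = (a.2 == 0).
Proof.
rewrite /qat; apply/eqP/eqP => [h|->]; last exact: qlift0p.
by apply: (@qlift_inj (N - a.1)); rewrite qlift0p.
Qed.

Ltac bnd := rewrite /=; lia.

Ltac qlev N :=
  repeat match goal with
  | H : qeq ?a ?b |- _ => move: H; rewrite (@qeq_at N a b); [move=> H | bnd | bnd]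
  end;
  try match goal with |- qeq ?a ?b => rewrite (@qeq_at N a b); [ | bnd | bnd] end;
  repeat match goal with
  | H : context [qat N (qmul ?a ?b)] |- _ =>
      rewrite (@qat_mul N a b) in H; [ | bnd | bnd]
  | |- context [qat N (qmul ?a ?b)] => rewrite (@qat_mul N a b); [ | bnd | bnd]
  | H : context [qat N qone] |- _ => rewrite qat_one in H
  | |- context [qat N qone] => rewrite qat_one
  | H : context [qat N (N, ?p)] |- _ => rewrite qat_pair in H
  | |- context [qat N (N, ?p)] => rewrite qat_pair
  end.

Lemma qeq_refl a : qeq a a.
Proof. by rewrite /qeq. Qed.

Lemma qeq_sym a b : qeq a b -> qeq b a.
Proof. by rewrite /qeq maxnC => ->. Qed.

Lemma qeq_trans a b c : qeq a b -> qeq b c -> qeq a c.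
Proof.
move=> h1 h2; qlev (maxn a.1 (maxn b.1 c.1)).
by rewrite h1 h2.
Qed.

Lemma qmul_congr a a' b b' : qeq a a' -> qeq b b' -> qeq (qmul a b) (qmul a' b').
Proof.
move=> h1 h2; qlev (maxn (maxn a.1 a'.1) (maxn b.1 b'.1)).
by rewrite h1 h2.
Qed.

Lemma qmulC a b : qeq (qmul a b) (qmul b a).
Proof. qlev (maxn a.1 b.1); exact: mulrC. Qed.

Lemma qmulA a b c : qeq (qmul a (qmul b c)) (qmul (qmul a b) c).
Proof. qlev (maxn a.1 (maxn b.1 c.1)); exact: mulrA. Qed.

Lemma qmul1 a : qeq (qmul qone a) a.
Proof. qlev a.1; exact: mul1r. Qed.

Lemma qmulr1 a : qeq (qmul a qone) a.
Proof. exact: qeq_trans (qmulC _ _) (qmul1 _). Qed.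

Lemma qzero_at N a : qzero a <-> qat N a = 0.
Proof.
rewrite /qzero; split => h; apply/eqP.
  by rewrite qat_eq0; apply/eqP.
by rewrite -(qat_eq0 N); apply/eqP.
Qed.

Lemma qzero_qeq a b : qeq a b -> qzero a -> qzero b.
Proof.
move=> h; qlev (maxn a.1 b.1).
by rewrite !(qzero_at (maxn a.1 b.1)) h.
Qed.

Lemma qmul_nz a b : ~ qzero a -> ~ qzero b -> ~ qzero (qmul a b).
Proof.
rewrite !(qzero_at (maxn a.1 b.1)) qat_mul; try bnd.
move=> ha hb /eqP; rewrite mulf_eq0 => /orP [] /eqP; auto.
Qed.

Lemma qcancel a b c : ~ qzero a -> qeq (qmul a b) (qmul a c) -> qeq b c.
Proof.
rewrite (qzero_at (maxn a.1 (maxn b.1 c.1))) => /eqP ha h.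
qlev (maxn a.1 (maxn b.1 c.1)).
exact: mulfI h.
Qed.

Lemma qdvd_poly N a b : (a.1 <= N)%N -> (b.1 <= N)%N ->
  (qat N a %| qat N b) -> qdvd a b.
Proof.
move=> ha hb /dvdpP [q E]; exists (N, q).
rewrite (@qeq_at N); try bnd.
rewrite qat_mul ?qat_pair ?E 1?mulrC //; bnd.
Qed.

Lemma qdvd_refl a : qdvd a a.
Proof. exists qone; exact: qmulr1. Qed.

Lemma qdvd_mul a c : qdvd a (qmul a c).
Proof. exists c; exact: qeq_refl. Qed.

Lemma qdvd_trans a b c : qdvd a b -> qdvd b c -> qdvd a c.
Proof.
move=> [k hk] [l hl]; exists (qmul k l).
apply: qeq_trans hl; apply: qeq_trans (qmulA _ _ _) _.
apply: qmul_congr hk (qeq_refl _).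
Qed.

Lemma qdvd_qeq a a' b b' : qeq a a' -> qeq b b' -> qdvd a b -> qdvd a' b'.
Proof.
move=> ha hb [k hk]; exists k.
apply: qeq_trans hb; apply: qeq_trans hk.
apply: qmul_congr (qeq_sym ha) (qeq_refl _).
Qed.

Lemma qeq_dvd a b : qeq a b -> qdvd a b.
Proof. by move=> h; apply: qdvd_qeq (qeq_refl _) h (qdvd_refl a). Qed.

Lemma qunit_qeq a b : qeq a b -> qunit a -> qunit b.
Proof.
move=> h [w hw]; exists w; apply: qeq_trans hw.
exact: qmul_congr (qeq_sym h) (qeq_refl _).
Qed.

Lemma qunit_const g : qunit g -> exists2 c, c != 0 & g.2 = c%:P.
Proof.
move=> [w E].
qlev (maxn g.1 w.1).
set N := maxn g.1 w.1 in E *.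
have gnz : qat N g != 0.
  by apply/eqP => h; move: E; rewrite h mul0r => /eqP; rewrite eq_sym oner_eq0.
have wnz : qat N w != 0.
  by apply/eqP => h; move: E; rewrite h mulr0 => /eqP; rewrite eq_sym oner_eq0.
have : size (qat N g * qat N w) = 1%N by rewrite E size_poly1.
rewrite size_mul // => hs.
have hg : size (qat N g) = 1%N.
  have h1 : (0 < size (qat N g))%N by rewrite size_poly_gt0.
  have h2 : (0 < size (qat N w))%N by rewrite size_poly_gt0.
  move: hs h1 h2; move: (size (qat N g)) (size (qat N w)) => x y; lia.
move/eqP: hg => /size_poly1P [c cnz hc].
exists c => //; apply: (@qlift_inj (N - g.1)).
by rewrite qliftC.
Qed.

Lemma irr_prime a b c : qirreducible a -> qdvd a (qmul b c) -> ~ qdvd a b -> qdvd a c.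
Proof.
move=> [anz [anu hirr]] [k hk] nab.
pose N := maxn (maxn a.1 b.1) (maxn c.1 k.1).
have E : qat N a * qat N k = qat N b * qat N c.
  by qlev N.
set A := qat N a in E; set B := qat N b in E; set C := qat N c in E.
pose G := gcdp A B.
have hGA : G %| A by exact: dvdp_gcdl.
have hGB : G %| B by exact: dvdp_gcdr.
have dec : qeq a (qmul (N, G) (N, A %/ G)).
  qlev N; by rewrite mulrC divpK.
case: (hirr _ _ dec) => [/qunit_const [g gnz /= hg] | /qunit_const [h hnz /= hh]].
- have cop : coprimep A B by rewrite /coprimep -/G hg size_polyC gnz.
  apply: (@qdvd_poly N); try bnd.
  rewrite -(Gauss_dvdpr _ cop) -E.
  exact: dvdp_mulr (dvdpp _).
- exfalso; apply: nab; apply: (@qdvd_poly N); try bnd.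
  apply/dvdpP; exists (B %/ G * (h^-1)%:P).
  rewrite -/A -(divpK hGA) hh -/B -{1}(divpK hGB).
  by rewrite -mulrA (mulrA _ h%:P) -polyCM mulVf // mul1r.
Qed.

Lemma qprod_cat s1 s2 : qeq (qprod (s1 ++ s2)) (qmul (qprod s1) (qprod s2)).
Proof.
elim: s1 => [|a s1 IH] /=; first exact: qeq_sym (qmul1 _).
apply: qeq_trans (qmulA _ _ _).
exact: qmul_congr (qeq_refl _) IH.
Qed.

Fixpoint subs (s : seq QM) : seq QM :=
  if s is a :: s' then subs s' ++ map (qmul a) (subs s') else [:: qone].

Lemma subs_prop s : (forall a, a \in s -> qirreducible a) ->
  forall d, qdvd d (qprod s) -> exists2 e, e \in subs s & qassoc d e.
Proof.
elim: s => [|a s IH] hs d.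
  move=> [k hk]; exists qone; first by rewrite inE.
  have h1 : qeq (qmul k d) qone := qeq_trans (qmulC k d) hk.
  exists k; split; [by exists d | exact: qeq_sym h1].
have ha : qirreducible a := hs a (mem_head _ _).
have anz : ~ qzero a := ha.1.
have hs' : forall b, b \in s -> qirreducible b.
  by move=> b hb; apply: hs; rewrite inE hb orbT.
move=> [k hk] /=; move: hk => /= hk.
case: (classic (qdvd a d)) => [[d' hd'] | nad].
  have : qdvd d' (qprod s).
    exists k; apply: (@qcancel a) => //.
    move: hk hd'; set q := qprod s => hk hd'.
    qlev (maxn (maxn a.1 d.1) (maxn (maxn d'.1 k.1) q.1)).
    by rewrite mulrA hd' hk.
  move/(IH hs') => [e he [u [hu heq]]].
  exists (qmul a e); first by rewrite mem_cat; apply/orP; right; exact: map_f.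
  exists u; split => //.
  qlev (maxn (maxn a.1 d.1) (maxn (maxn d'.1 e.1) u.1)).
  by rewrite heq -hd' mulrCA.
have hak : qdvd a k.
  apply: (irr_prime ha _ nad); exists (qprod s); exact: qeq_sym hk.
case: hak => [k' hk'].
have : qdvd d (qprod s).
  exists k'; apply: (@qcancel a) => //.
  move: hk hk'; set q := qprod s => hk hk'.
  qlev (maxn (maxn a.1 d.1) (maxn (maxn k'.1 k.1) q.1)).
  by rewrite mulrCA hk' hk.
move/(IH hs') => [e he hass]; exists e => //; by rewrite mem_cat he.
Qed.

Lemma atomic_fin P : atomic_elt P -> fin_divisors P.
Proof.
case => [hu | [s [_ [hs hP]]]].
  exists (subs [::]) => d hd; apply: (@subs_prop [::]) => //.
  exact: qdvd_trans hd hu.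
exists (subs s) => d hd; apply: subs_prop hs _ _.
exact: qdvd_qeq (qeq_refl _) hP hd.
Qed.

Lemma count_eq_sub (T : eqType) (a b : pred T) (s : seq T) :
  (forall x, b x -> a x) -> count b s = count a s ->
  forall x, x \in s -> a x -> b x.
Proof.
move=> hba; elim: s => // y s IH /= hc x.
have hsub := sub_count hba s.
have hy := hba y.
rewrite inE => /orP [/eqP -> | hx] hax.
  move: hc hsub hy hax; case: (b y); case: (a y) => //=; lia.
apply: IH => //.
move: hc hsub hy; case: (b y); case: (a y) => //=; lia.
Qed.

Lemma stab (g : nat -> nat) : (forall n m, (n <= m)%N -> (g m <= g n)%N) ->
  exists N, forall n, (N <= n)%N -> g n = g N.
Proof.
move=> hg.
suff H : forall v N, (g N <= v)%N -> exists N', forall n, (N' <= n)%N -> g n = g N'.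
  exact: (H (g 0%N) 0%N).
elim=> [|v IH] N hN.
  exists N => n hn; have := hg _ _ hn; lia.
case: (classic (forall n, (N <= n)%N -> g n = g N)) => [h|]; first by exists N.
move=> /not_all_ex_not [n hn']; have [hn hne] := imply_to_and _ _ hn'.
apply: (IH n); have := hg _ _ hn; lia.
Qed.

Definition dec (p : Prop) : bool := if excluded_middle_informative p then true else false.

Lemma decP p : dec p <-> p.
Proof. by rewrite /dec; case: excluded_middle_informative. Qed.

Lemma fin_accp P : fin_divisors P -> accp_at P.
Proof.
move=> [s hs] f f0 hf.
have chain : forall n m, (n <= m)%N -> qdvd (f m) (f n).
  move=> n m /subnK <-; elim: (m - n)%N => [|k IH]; first by rewrite add0n; exact: qdvd_refl.
  rewrite addSn; exact: qdvd_trans (hf _) IH.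
have divP : forall n, qdvd (f n) P.
  by move=> n; apply: qdvd_trans (chain 0%N n (leq0n n)) (qeq_dvd f0).
pose g n := count (fun e => dec (qdvd e (f n))) s.
have gmono : forall n m, (n <= m)%N -> (g m <= g n)%N.
  move=> n m hnm; apply: sub_count => e /= /decP h; apply/decP.
  exact: qdvd_trans h (chain _ _ hnm).
have [N hN] := stab gmono.
exists N => n hn; split; last exact: chain.
have [e he [u [[w hw] heq]]] := hs _ (divP N).
have hfe : qdvd (f N) e by exists u; exact: qeq_trans (qmulC _ _) (qeq_sym heq).
have hef : qdvd e (f N).
  exists w; move: heq hw; set y := f N => heq hw.
  qlev (maxn (maxn e.1 u.1) (maxn w.1 y.1)).
  by rewrite heq mulrAC hw mul1r.
have : dec (qdvd e (f n)).
  have hba : forall x, dec (qdvd x (f n)) -> dec (qdvd x (f N)).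
    by move=> x /= /decP h; apply/decP; exact: qdvd_trans h (chain _ _ hn).
  apply: (@count_eq_sub _ (fun x => dec (qdvd x (f N))) (fun x => dec (qdvd x (f n))) s hba (hN n hn) e he).
  by apply/decP.
move/decP; exact: qdvd_trans hfe.
Qed.

Lemma irr_atomic a : qirreducible a -> atomic_elt a.
Proof.
move=> h; right; exists [:: a]; split => //; split.
  by move=> b; rewrite inE => /eqP ->.
exact: qeq_sym (qmulr1 a).
Qed.

Lemma atomic_qeq a b : qeq a b -> atomic_elt a -> atomic_elt b.
Proof.
move=> h [hu | [s [h1 [h2 h3]]]]; first by left; exact: qunit_qeq h hu.
by right; exists s; split => //; split => //; exact: qeq_trans (qeq_sym h) h3.
Qed.

Lemma atomic_mul b c : ~ qunit b -> ~ qunit c -> atomic_elt b -> atomic_elt c ->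
  atomic_elt (qmul b c).
Proof.
move=> bnu cnu [//|[s1 [n1 [i1 e1]]]] [//|[s2 [n2 [i2 e2]]]].
right; exists (s1 ++ s2); split; first by move: n1; case: (s1).
split; first by move=> a; rewrite mem_cat => /orP [] ?; [apply: i1 | apply: i2].
apply: qeq_trans (qeq_sym (qprod_cat _ _)).
exact: qmul_congr.
Qed.

Lemma qzero_mull b c : qzero b -> qzero (qmul b c).
Proof.
rewrite !(qzero_at (maxn b.1 c.1)) qat_mul; try bnd.
by move=> ->; rewrite mul0r.
Qed.

Definition NA x := ~ qzero x /\ ~ atomic_elt x.

Lemma proper_div x y z : ~ qzero x -> qeq x (qmul y z) -> ~ qunit z -> ~ qdvd x y.
Proof.
move=> xnz hx znu [k hk]; apply: znu; exists k.
apply: (@qcancel x) => //.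
qlev (maxn (maxn x.1 y.1) (maxn z.1 k.1)).
by rewrite mulr1 mulrCA hk mulrC -hx.
Qed.

Lemma step x : NA x -> exists y, NA y /\ qdvd y x /\ ~ qdvd x y.
Proof.
move=> [xnz xna].
have xnu : ~ qunit x by move=> h; apply: xna; left.
have hni : ~ qirreducible x by move=> h; apply: xna; exact: irr_atomic.
have [b [c [hx [bnu cnu]]]] : exists b c, qeq x (qmul b c) /\ ~ qunit b /\ ~ qunit c.
  apply: NNPP => hne; apply: hni; split => //; split => //.
  move=> b c hbc; apply: NNPP => hh; apply: hne; exists b, c; split => //.
  by split => ?; apply: hh; [left|right].
have bnz : ~ qzero b.
  by move=> hb; apply: xnz; apply: qzero_qeq (qeq_sym hx) _; exact: qzero_mull.
have hx' : qeq x (qmul c b) := qeq_trans hx (qmulC _ _).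
have cnz : ~ qzero c.
  by move=> hc; apply: xnz; apply: qzero_qeq (qeq_sym hx') _; exact: qzero_mull.
case: (classic (atomic_elt b)) => hb.
  case: (classic (atomic_elt c)) => hc.
    by exfalso; apply: xna; apply: atomic_qeq (qeq_sym hx) _; exact: atomic_mul.
  exists c; split => //; split; first by exists b; exact: qeq_sym hx'.
  exact: proper_div hx' bnu.
exists b; split => //; split; first by exists c; exact: qeq_sym hx.
exact: proper_div hx cnu.
Qed.

Lemma accp_atomic P : ~ qzero P -> accp_at P -> atomic_elt P.
Proof.
move=> Pnz hacc; apply: NNPP => Pna.
pose F x := epsilon (inhabits qone) (fun y => NA y /\ qdvd y x /\ ~ qdvd x y).
have FP : forall x, NA x -> NA (F x) /\ qdvd (F x) x /\ ~ qdvd x (F x).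
  by move=> x hx; exact: (epsilon_spec (inhabits qone) (fun y => NA y /\ qdvd y x /\ ~ qdvd x y) (step hx)).
pose f n := iter n F P.
have fNA : forall n, NA (f n).
  by elim => [|n IH]; [split | exact: (FP _ IH).1].
have [N hN] := hacc f (qeq_refl _) (fun n => (FP _ (fNA n)).2.1).
have := (hN N.+1 (leqnSn N)).1.
exact: (FP _ (fNA N)).2.2.
Qed.

Theorem corollary4p3 (P : QM) :
  ~ qzero P ->
  (fin_divisors P <-> accp_at P) /\ (accp_at P <-> atomic_elt P).
Proof.
move=> Pnz; split; split.
- exact: fin_accp.
- by move=> h; apply: atomic_fin; exact: accp_atomic.
- exact: accp_atomic.
- by move=> h; apply: fin_accp; exact: atomic_fin.
Qed.
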